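(* Let $F=\prod_iF_i$ be a product of fields, $G$ a group acting on $F$ by ring automorphisms such that $G$ acts transitively on the principal idempotents of $F$, and $H\le G$ a subgroup such that $G$ stabilises $L:=F^H$. Then: (1) the functor $F\otimes_L-\colon\mathrm{Rep}^H_L(G)\to\mathrm{Rep}_F(G)$ (diagonal $G$-action) is exact, monoidal and fully faithful; (2) if $H$ is normal in $G$, its essential image is the full subcategory of $V\in\mathrm{Rep}_F(G)$ with $F\cdot V^H=V$, and on this subcategory $(-)^H\colon\mathrm{Rep}_F(G)\to\mathrm{Rep}^H_L(G)$ is a quasi-inverse to $F\otimes_L-$; (3) the essential image of $F\otimes_L-$ is closed under subquotients.
   Context: For a group $G$ acting on a ring $R$ and a subgroup $H$, $\mathrm{Rep}_R(G)$ is the category of modules over the skew group ring $R\rtimes G$ that are free of finite rank over $R$, and $\mathrm{Rep}^H_R(G)$ is its full subcategory of modules $V$ with $R\cdot V^H=V$. The principal idempotents of $F=\prod_iF_i$ are the coordinate idempotents. *)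

(* Defs.v *)
From HB Require Import structures.
From mathcomp Require Import all_boot all_order all_algebra.
From mathcomp Require Import monoid.
From mathcomp.real_closed Require Import mxtens.

Set Implicit Arguments.
Unset Strict Implicit.
Unset Printing Implicit Defensive.

Import GRing.Theory.
Local Open Scope ring_scope.

(* A subring R of F (R = F or R = L = F^H) is encoded by a predicate P on F.  *)
(* An object of Rep_R(G) (an R#G-module free of finite rank over R) is, after *)
(* choosing an R-basis, R^n with a semilinear G-action; every such action is  *)
(*     g . v = rho g *m (g v)       (g v = g applied entrywise)               *)
(* for a unique "cocycle" rho : G -> 'M_n with entries in R, rho 1 = 1 and    *)
(* rho (g*h) = rho g *m g(rho h).  Morphisms are R-matrices commuting with    *)
(* the G-actions.                                                             *)

Section RepModel.

Variables (F : comPzRingType) (G : groupType) (act : G -> {rmorphism F -> F}).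

Definition mx_in (P : F -> Prop) m n (A : 'M[F]_(m, n)) : Prop :=
  forall i j, P (A i j).

Definition gact n (rho : G -> 'M[F]_n) (g : G) (v : 'cV[F]_n) : 'cV[F]_n :=
  rho g *m map_mx (act g) v.

Definition is_rep (P : F -> Prop) n (rho : G -> 'M[F]_n) : Prop :=
  [/\ forall g, mx_in P (rho g),
      rho 1%g = 1%:M &
      forall g h, rho (g * h)%g = rho g *m map_mx (act g) (rho h)].

Definition is_hom (P : F -> Prop) n m (rho : G -> 'M[F]_n) (tau : G -> 'M[F]_m)
    (A : 'M[F]_(m, n)) : Prop :=
  mx_in P A /\ forall g v, A *m gact rho g v = gact tau g (A *m v).

Definition is_invariant (P : F -> Prop) (Hs : G -> Prop) n (rho : G -> 'M[F]_n)
    (v : 'cV[F]_n) : Prop :=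
  mx_in P v /\ forall h, Hs h -> gact rho h v = v.

Definition spanned_by_invariants (P : F -> Prop) (Hs : G -> Prop) n
    (rho : G -> 'M[F]_n) : Prop :=
  forall v : 'cV[F]_n, mx_in P v ->
    exists k (c : 'I_k -> F) (w : 'I_k -> 'cV[F]_n),
      [/\ forall j, P (c j),
          forall j, is_invariant P Hs rho (w j) &
          v = \sum_(j < k) c j *: w j].

Definition allF : F -> Prop := fun _ => True.

Definition fixedL (Hs : G -> Prop) : F -> Prop :=
  fun x => forall h, Hs h -> act h x = x.

Definition RepF n (rho : G -> 'M[F]_n) : Prop := is_rep allF rho.

Definition RepHL (Hs : G -> Prop) n (rho : G -> 'M[F]_n) : Prop :=
  is_rep (fixedL Hs) rho /\ spanned_by_invariants (fixedL Hs) Hs rho.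

(* With the basis 1 (x) e_j of F (x)_L L^n = F^n, the diagonal action
   g (f (x) v) = g(f) (x) rho g (g v) becomes f v |-> rho g *m g(f v): the same
   cocycle, now regarded over F; on morphisms it is the same matrix. *)
Definition ext_obj n (rho : G -> 'M[F]_n) : G -> 'M[F]_n := rho.
Definition ext_hom m n (A : 'M[F]_(m, n)) : 'M[F]_(m, n) := A.

Definition isoF n m (rho : G -> 'M[F]_n) (tau : G -> 'M[F]_m) : Prop :=
  exists (A : 'M[F]_(m, n)) (B : 'M[F]_(n, m)),
    [/\ is_hom allF rho tau A, is_hom allF tau rho B,
        A *m B = 1%:M & B *m A = 1%:M].

Definition ess_image (Hs : G -> Prop) n (rho : G -> 'M[F]_n) : Prop :=
  exists m (tau : G -> 'M[F]_m), RepHL Hs tau /\ isoF (ext_obj tau) rho.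

Definition exact_at (P : F -> Prop) n1 n2 n3
    (A : 'M[F]_(n2, n1)) (B : 'M[F]_(n3, n2)) : Prop :=
  forall v : 'cV[F]_n2, mx_in P v ->
    (B *m v = 0 <-> exists u : 'cV[F]_n1, mx_in P u /\ v = A *m u).

Definition invariant_basis (Hs : G -> Prop) n (rho : G -> 'M[F]_n) m
    (b : 'M[F]_(n, m)) : Prop :=
  (forall j, is_invariant allF Hs rho (col j b)) /\
  forall v, is_invariant allF Hs rho v ->
    exists! c : 'cV[F]_m, mx_in (fixedL Hs) c /\ v = b *m c.

End RepModel.

(* Main.v *)
Require Import Defs.
From HB Require Import structures.
From mathcomp Require Import all_boot all_order all_algebra.
From mathcomp Require Import monoid.
From mathcomp.real_closed Require Import mxtens.
From Stdlib Require Import ClassicalEpsilon.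
From mathcomp Require Import ring.

Set Implicit Arguments.
Unset Strict Implicit.
Unset Printing Implicit Defensive.

Import GRing.Theory.
Local Open Scope ring_scope.

Section Coord.
Variables (F : comPzRingType) (I : Type) (K : I -> fieldType)
  (pi : forall i : I, {rmorphism F -> K i}).
Hypothesis pi_inj : forall x : F, (forall i, pi i x = 0) -> x = 0.
Hypothesis pi_surj : forall y : (forall i, K i), exists x : F, forall i, pi i x = y i.

Lemma pi_eq x y : (forall i, pi i x = pi i y) -> x = y.
Proof.
move=> e; apply/eqP; rewrite -subr_eq0; apply/eqP/pi_inj => i.
by rewrite rmorphB /= e subrr.
Qed.

Local Notation pimx i A := (map_mx (pi i) A).

Lemma pimx_eq m n (A B : 'M[F]_(m, n)) : (forall i, pimx i A = pimx i B) -> A = B.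
Proof.
move=> e; apply/matrixP => a b; apply: pi_eq => i.
by move: (e i) => /matrixP /(_ a b); rewrite !mxE.
Qed.

Definition pick (y : forall i, K i) : F := proj1_sig (constructive_indefinite_description _ (pi_surj y)).

Lemma pickP y i : pi i (pick y) = y i.
Proof. exact: (proj2_sig (constructive_indefinite_description _ (pi_surj y))). Qed.

Definition q (x : F) : F := pick (fun i => (pi i x)^-1).

Lemma pi_q i x : pi i (q x) = (pi i x)^-1.
Proof. exact: pickP. Qed.

Lemma glue m n (u : forall i, 'M[K i]_(m, n)) : exists U : 'M[F]_(m, n), forall i, pimx i U = u i.
Proof.
exists (\matrix_(a, b) pick (fun i => u i a b)).
by move=> i; apply/matrixP => a b; rewrite !mxE pickP.
Qed.

Definition unitF (x : F) := forall i, pi i x != 0.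

Lemma unitF_q x : unitF x -> x * q x = 1.
Proof. by move=> u; apply: pi_eq => i; rewrite rmorphM rmorph1 /= pi_q (mulfV (u i)). Qed.

Lemma qK x : x * q x * x = x.
Proof.
apply: pi_eq => i; rewrite !rmorphM /= pi_q.
by have [->|nz] := eqVneq (pi i x) 0; rewrite ?mulr0 // mulfV // mul1r.
Qed.

Lemma qqK x : q x * x * q x = q x.
Proof.
apply: pi_eq => i; rewrite !rmorphM /= pi_q.
by have [->|nz] := eqVneq (pi i x) 0; rewrite ?invr0 ?mul0r // mulVf // mul1r.
Qed.

End Coord.

Section FieldFacts.
Variable K : fieldType.

Lemma exists_unit_rowsub m k (N : 'M[K]_(m, k)) :
  \rank N = k -> exists T : 'I_k -> 'I_m, rowsub T N \in unitmx.
Proof.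
move=> e; move: (maxrankfun N) (maxrowsub_free N); rewrite e => f fr.
by exists (fun x => f x); rewrite -row_free_unit.
Qed.

Lemma rank_factor r c (B : 'M[K]_(r, c)) :
  exists (S : 'I_(\rank B) -> 'I_r) (T : 'I_(\rank B) -> 'I_c),
    mxsub S T B \in unitmx /\ B = colsub T B *m invmx (mxsub S T B) *m rowsub S B.
Proof.
set S := maxrankfun B; set R := rowsub S B.
have frR : row_free R by exact: maxrowsub_free.
have rR : \rank R^T = \rank B by rewrite mxrank_tr; apply/eqP.
have [T uT] := exists_unit_rowsub rR.
have eST : mxsub S T B = colsub T R by apply/matrixP => a b; rewrite !mxE.
have uST : mxsub S T B \in unitmx.
  by rewrite eST -[colsub T R]trmxK unitmx_tr; congr (_ \in unitmx): uT; apply/matrixP => a b; rewrite !mxE.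
exists S, T; split => //.
have : (B <= R)%MS by rewrite /R /S eq_maxrowsub.
case/submxP => Y eY.
have eY' : colsub T B = Y *m mxsub S T B.
  by rewrite eST mulmx_colsub; exact: (congr1 (colsub T) eY).
rewrite eY' mulmxK //; exact: eY.
Qed.

End FieldFacts.

Lemma quasi_uniq (R : comPzRingType) (x y z : R) :
  x * y * x = x -> y * x * y = y -> x * z * x = x -> z * x * z = z -> y = z.
Proof.
move=> h1 h2 h3 h4.
have e1 : y = z * x * y.
  transitivity (y * (x * z * x) * y); first by rewrite h3 h2.
  transitivity (z * (x * y * x) * y); first by ring.
  by rewrite h1.
have e2 : z = y * x * z.
  transitivity (z * (x * y * x) * z); first by rewrite h1 h4.
  transitivity (y * (x * z * x) * z); first by ring.
  by rewrite h3.
by rewrite {1}e1 [in RHS]e2; ring.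
Qed.

Section Main.
Variables (F : comPzRingType) (I : Type) (K : I -> fieldType)
  (pi : forall i : I, {rmorphism F -> K i}).
Hypothesis pi_inj : forall x : F, (forall i, pi i x = 0) -> x = 0.
Hypothesis pi_surj : forall y : (forall i, K i), exists x : F, forall i, pi i x = y i.
Variables (G : groupType) (act : G -> {rmorphism F -> F}).
Hypothesis act1 : forall x, act 1%g x = x.
Hypothesis actM : forall g h x, act (g * h)%g x = act g (act h x).
Variable (H : G -> Prop).
Hypothesis H1 : H 1%g.
Hypothesis HM : forall g h, H g -> H h -> H (g * h)%g.
Hypothesis HV : forall g, H g -> H (g^-1)%g.
Hypothesis stabL : forall g x, fixedL act H x -> fixedL act H (act g x).

Local Notation L := (fixedL act H).
Local Notation qF := (q pi_surj).
Local Notation pm i A := (map_mx (pi i) A).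
Local Notation uF := (unitF pi).

Local Notation actm g A := (map_mx (act g) A).

Lemma actmM g h m n (A : 'M[F]_(m, n)) : actm g (actm h A) = actm (g * h)%g A.
Proof. by apply/matrixP => a b; rewrite !mxE actM. Qed.

Lemma actm1 m n (A : 'M[F]_(m, n)) : actm 1%g A = A.
Proof. by apply/matrixP => a b; rewrite !mxE act1. Qed.

Lemma actmK g m n (A : 'M[F]_(m, n)) : actm g (actm g^-1 A) = A.
Proof. by rewrite actmM mulgV actm1. Qed.

Lemma actmKV g m n (A : 'M[F]_(m, n)) : actm g^-1 (actm g A) = A.
Proof. by rewrite actmM mulVg actm1. Qed.

Lemma actm_1 g n : actm g (1%:M : 'M[F]_n) = 1%:M.
Proof. exact: map_mx1. Qed.

Lemma actmMx g m n p (A : 'M[F]_(m, n)) (B : 'M[F]_(n, p)) :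
  actm g (A *m B) = actm g A *m actm g B.
Proof. exact: map_mxM. Qed.

Lemma act_q g x : act g (qF x) = qF (act g x).
Proof.
apply: (@quasi_uniq _ (act g x)).
- by rewrite -!rmorphM /= qK.
- by rewrite -!rmorphM /= qqK.
- exact: qK.
- exact: qqK.
Qed.

Definition fixm m n (A : 'M[F]_(m, n)) := forall h, H h -> actm h A = A.
Arguments fixm {m n} A.

Lemma mx_inLP m n (A : 'M[F]_(m, n)) : mx_in L A <-> fixm A.
Proof.
split => [hA h Hh | hA a b h Hh].
  by apply/matrixP => a b; rewrite !mxE hA.
by move: (hA h Hh) => /matrixP /(_ a b); rewrite !mxE.
Qed.

Lemma fixmM m n p (A : 'M[F]_(m, n)) (B : 'M[F]_(n, p)) : fixm A -> fixm B -> fixm (A *m B).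
Proof. by move=> hA hB h Hh; rewrite actmMx hA ?hB. Qed.

Lemma fixm_stab g m n (A : 'M[F]_(m, n)) : fixm A -> fixm (actm g A).
Proof.
move=> /mx_inLP hA; apply/mx_inLP => a b; rewrite mxE; exact: stabL.
Qed.

Lemma fixm1 n : fixm (1%:M : 'M[F]_n).
Proof. by move=> h Hh; apply: actm_1. Qed.

Lemma rep_inv P n (r : G -> 'M[F]_n) : is_rep act P r ->
  forall g, r g *m actm g (r g^-1)%g = 1%:M /\ actm g (r g^-1)%g *m r g = 1%:M.
Proof.
case=> _ r1 rM g; split.
  by rewrite -rM mulgV r1.
have := rM g^-1%g g; rewrite mulVg r1 => /(congr1 (map_mx (act g))).
by rewrite actmMx actmK actm_1 => ->.
Qed.

Lemma hom_mx P n m (r1 : G -> 'M[F]_n) (r2 : G -> 'M[F]_m) (A : 'M[F]_(m, n)) :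
  is_hom act P r1 r2 A -> forall g, A *m r1 g = r2 g *m actm g A.
Proof.
case=> _ hA g; apply/matrixP => a j.
have dm : map_mx (act g) (delta_mx j 0 : 'cV[F]_n) = delta_mx j 0.
  by apply/matrixP => x y; rewrite !mxE rmorph_nat.
have := hA g (delta_mx j 0); rewrite /gact map_mxM dm !mulmxA => /matrixP /(_ a 0).
by rewrite -!colE !mxE.
Qed.

Lemma hom_of_mx P n m (r1 : G -> 'M[F]_n) (r2 : G -> 'M[F]_m) (A : 'M[F]_(m, n)) :
  mx_in P A -> (forall g, A *m r1 g = r2 g *m actm g A) -> is_hom act P r1 r2 A.
Proof.
move=> hA e; split => // g v; rewrite /gact mulmxA e -mulmxA.
by rewrite map_mxM.
Qed.

Lemma mx_in_all m n (A : 'M[F]_(m, n)) : mx_in (@allF F) A.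
Proof. by []. Qed.

Lemma conj_rep n (r : G -> 'M[F]_n) (b b' : 'M[F]_n) :
  is_rep act (@allF F) r -> b *m b' = 1%:M -> b' *m b = 1%:M ->
  let r' := fun g => b' *m r g *m actm g b in
  [/\ is_rep act (@allF F) r', is_hom act (@allF F) r' r b & is_hom act (@allF F) r r' b'].
Proof.
move=> [_ r1 rM] bb' b'b r'; split.
- split => //.
    by rewrite /r' r1 mulmx1 actm1.
  move=> g h; rewrite /r' rM -actmM !actmMx !mulmxA.
  have e : actm g b *m actm g b' = 1%:M by rewrite -actmMx bb' actm_1.
  by rewrite -(mulmxA (b' *m r g) (actm g b)) e mulmx1.
- apply: hom_of_mx => // g; rewrite /r' !mulmxA bb' mul1mx //.
- apply: hom_of_mx => // g; rewrite /r' -!mulmxA -actmMx bb' actm_1 mulmx1 //.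
Qed.

Definition Inv n p (r : G -> 'M[F]_n) (M : 'M[F]_(n, p)) :=
  forall h, H h -> r h *m actm h M = M.

Lemma mx_eq_cols m n (A B : 'M[F]_(m, n)) :
  (forall j, A *m (delta_mx j 0 : 'cV[F]_n) = B *m delta_mx j 0) -> A = B.
Proof.
move=> eAB; apply/matrixP => a j; move: (eAB j) => /matrixP /(_ a 0).
by rewrite -!colE !mxE.
Qed.

Lemma delta_L n (j : 'I_n) : mx_in L (delta_mx j 0 : 'cV[F]_n).
Proof. by move=> x y h' _; rewrite !mxE rmorph_nat. Qed.

Lemma RepHL_trivH n (r : G -> 'M[F]_n) : RepHL act H r -> forall h, H h -> r h = 1%:M.
Proof.
move=> [[rL _ _] sp] h Hh; apply: mx_eq_cols => j; rewrite mul1mx.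
have [k [c [w [cL wI ->]]]] := sp _ (delta_L j).
rewrite mulmx_sumr; apply: eq_bigr => l _; rewrite -scalemxAr; congr (_ *: _).
have [wL wi] := wI l; have := wi h Hh; rewrite /gact.
by have := (proj1 (mx_inLP _) wL) h Hh => ->.
Qed.


Definition cc (x : F) := x * qF x.

Lemma pi_cc i x : pi i (cc x) = (pi i x != 0)%:R.
Proof.
rewrite /cc rmorphM /= pi_q.
by have [->|nz] := eqVneq (pi i x) 0; rewrite ?mul0r // mulfV.
Qed.

Lemma act_cc g x : act g (cc x) = cc (act g x).
Proof. by rewrite /cc rmorphM /= act_q. Qed.

Lemma cc_mulr x y : uF y -> cc (x * y) = cc x.
Proof.
move=> uy; apply: (pi_eq pi_inj) => i; rewrite !pi_cc rmorphM /=.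
by rewrite mulf_eq0 (negPf (uy i)) orbF.
Qed.

Definition dT m k (N : 'M[F]_(m, k)) (T : {ffun 'I_k -> 'I_m}) := \det (rowsub T N).

Definition tsel m k (c : {ffun 'I_k -> 'I_m} -> F) T :=
  c T * \prod_(T' | (enum_rank T' < enum_rank T)%N) (1 - c T').

Definition Sel m k (N : 'M[F]_(m, k)) : 'M[F]_(k, m) :=
  \sum_T tsel (fun T => cc (dT N T)) T *: rowsub T 1%:M.

Lemma pi_dT i m k (N : 'M[F]_(m, k)) T : pi i (dT N T) = \det (rowsub T (pm i N)).
Proof. by rewrite /dT -det_map_mx map_mxsub. Qed.

Lemma act_dT g m k (N : 'M[F]_(m, k)) T : act g (dT N T) = dT (actm g N) T.
Proof. by rewrite /dT -det_map_mx map_mxsub. Qed.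

Lemma Sel_act g m k (N : 'M[F]_(m, k)) : actm g (Sel N) = Sel (actm g N).
Proof.
apply/matrixP => a b; rewrite /Sel mxE !summxE rmorph_sum; apply: eq_bigr => T _.
rewrite !mxE rmorphM /= rmorph_nat; congr (_ * _).
rewrite /tsel rmorphM rmorph_prod /= act_cc act_dT; congr (_ * _).
by apply: eq_bigr => T' _; rewrite rmorphB rmorph1 /= act_cc act_dT.
Qed.

Lemma Sel_mulr m k (N : 'M[F]_(m, k)) (s : 'M[F]_k) : uF (\det s) -> Sel (N *m s) = Sel N.
Proof.
move=> us; rewrite /Sel; apply: eq_bigr => T _; congr (_ *: _).
have e T' : cc (dT (N *m s) T') = cc (dT N T').
  by rewrite /dT -mul_rowsub_mx det_mulmx cc_mulr.
by rewrite /tsel e; congr (_ * _); apply: eq_bigr => T' _; rewrite e.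
Qed.

Lemma pm_rowsub1 i m k (T : 'I_k -> 'I_m) : pm i (rowsub T (1%:M : 'M[F]_m)) = rowsub T 1%:M.
Proof. by apply/matrixP => a b; rewrite !mxE rmorph_nat. Qed.

Lemma Sel_coord i m k (N : 'M[F]_(m, k)) : \rank (pm i N) = k ->
  exists T0, pi i (dT N T0) != 0 /\ pm i (Sel N) = rowsub T0 1%:M.
Proof.
move=> rk; have [Tf uTf] := exists_unit_rowsub rk.
pose b T := pi i (dT N T) != 0.
have bTf : b (finfun Tf).
  rewrite /b pi_dT; move: uTf; rewrite unitmxE unitfE.
  by congr (_ != 0); congr (\det _); apply/matrixP => x y; rewrite !mxE ffunE.
have [T0 bT0 minT0] := @arg_minnP _ (finfun Tf) b (fun T => val (enum_rank T)) bTf.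
exists T0; split => //.
have etsel T : pi i (tsel (fun T => cc (dT N T)) T) = (T == T0)%:R.
  rewrite /tsel rmorphM rmorph_prod /= pi_cc -/(b T).
  have [-> | nT] := eqVneq T T0.
    rewrite bT0 mul1r big1 // => T' lt; rewrite rmorphB rmorph1 /= pi_cc -/(b T').
    case bT' : (b T'); last by rewrite subr0.
    by have := minT0 _ bT'; rewrite leqNgt lt.
  case bT : (b T); last by rewrite mul0r.
  have lt : (enum_rank T0 < enum_rank T)%N.
    rewrite ltn_neqAle minT0 // andbT; apply: contra nT => /eqP e.
    by apply/eqP/enum_rank_inj/val_inj.
  have t1 : (true%:R : K i) = 1 by [].
  by rewrite (bigD1 T0) //= rmorphB /= pi_cc -/(b T0) bT0 t1 rmorph1 subrr mul0r mulr0.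
apply/matrixP => x y; rewrite mxE summxE rmorph_sum (bigD1 T0) //= big1 => [|T nT].
  by rewrite !mxE rmorphM /= etsel eqxx mul1r addr0 rmorph_nat.
by rewrite !mxE rmorphM /= etsel (negPf nT) mul0r.
Qed.

Lemma D_unitF m k (N : 'M[F]_(m, k)) : (forall i, \rank (pm i N) = k) -> uF (\det (Sel N *m N)).
Proof.
move=> rk i; have [T0 [nz e]] := Sel_coord (rk i).
by rewrite -det_map_mx map_mxM e -rowsubE -map_mxsub det_map_mx.
Qed.

Definition invm n (X : 'M[F]_n) := qF (\det X) *: \adj X.

Lemma invmP n (X : 'M[F]_n) : uF (\det X) -> X *m invm X = 1%:M /\ invm X *m X = 1%:M.
Proof.
move=> u; rewrite /invm -scalemxAr -scalemxAl mul_mx_adj mul_adj_mx scale_scalar_mx.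
by rewrite mulrC unitF_q.
Qed.

Lemma invm_act g n (X : 'M[F]_n) : actm g (invm X) = invm (actm g X).
Proof. by rewrite /invm map_mxZ /= act_q map_mx_adj det_map_mx. Qed.

Lemma uF_of_inv n (X Y : 'M[F]_n) : X *m Y = 1%:M -> uF (\det X) /\ uF (\det Y).
Proof.
move=> /(congr1 determinant); rewrite det_mulmx det1 => e.
split => i; apply/eqP => z; have := congr1 (pi i) e; rewrite rmorphM rmorph1 /= z.
  by rewrite mul0r => /eqP; rewrite eq_sym oner_eq0.
by rewrite mulr0 => /eqP; rewrite eq_sym oner_eq0.
Qed.

Lemma uF_detM n (X Y : 'M[F]_n) : uF (\det X) -> uF (\det Y) -> uF (\det (X *m Y)).
Proof. by move=> uX uY i; rewrite det_mulmx rmorphM mulf_neq0 ?uX ?uY. Qed.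

Lemma inv_uniq n (X Y Z : 'M[F]_n) : X *m Y = 1%:M -> Z *m X = 1%:M -> Y = Z.
Proof. by move=> e1 e2; rewrite -[Y]mul1mx -e2 -mulmxA e1 mulmx1. Qed.

Lemma invmM n (X Y : 'M[F]_n) : uF (\det X) -> uF (\det Y) ->
  invm (X *m Y) = invm Y *m invm X.
Proof.
move=> uX uY; symmetry; apply: (@inv_uniq _ (X *m Y)).
  by rewrite mulmxA -(mulmxA X) (proj1 (invmP uY)) mulmx1 (proj1 (invmP uX)).
exact: (proj2 (invmP (uF_detM uX uY))).
Qed.

Lemma rank_of_inj m k (N : 'M[F]_(m, k)) :
  (forall u : 'cV_k, N *m u = 0 -> u = 0) -> forall i, \rank (pm i N) = k.
Proof.
move=> inj i.
have [U hU] := glue pi_surj (fun i => (kermx (pm i N)^T)^T).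
have NU : N *m U = 0.
  apply: (pimx_eq pi_inj) => j; rewrite map_mxM hU map_mx0.
  by apply/trmx_inj; rewrite trmx_mul trmxK mulmx_ker trmx0.
have U0 : U = 0.
  apply/matrixP => a b; have := inj (col b U).
  by rewrite colE mulmxA NU mul0mx => /(_ erefl) /matrixP /(_ a 0); rewrite -colE !mxE.
have := hU i; rewrite U0 map_mx0 => /(congr1 trmx); rewrite trmxK trmx0 => /esym/eqP.
by rewrite kermx_eq0 -mxrank_tr => /eqP.
Qed.

Lemma rank_of_rinv n p (M : 'M[F]_(n, p)) (Y : 'M[F]_(p, n)) :
  M *m Y = 1%:M -> forall i, \rank (pm i M^T) = n.
Proof.
move=> e i; rewrite -map_trmx mxrank_tr; apply/eqP; rewrite eqn_leq rank_leq_row /=.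
have := mxrankM_maxl (pm i M) (pm i Y); rewrite -map_mxM e map_mx1 mxrank1 //.
Qed.


Lemma actm_delta g m n (a : 'I_m) (b : 'I_n) : actm g (delta_mx a b : 'M[F]_(m, n)) = delta_mx a b.
Proof. by apply/matrixP => x y; rewrite !mxE rmorph_nat. Qed.

Lemma Inv_col n p (r : G -> 'M[F]_n) (M : 'M[F]_(n, p)) :
  Inv r M -> forall j, is_invariant act (@allF F) H r (col j M).
Proof.
move=> iM j; split => // h Hh; rewrite /gact colE map_mxM actm_delta mulmxA.
by rewrite iM.
Qed.

Lemma Inv_cols n p (r : G -> 'M[F]_n) (M : 'M[F]_(n, p)) :
  (forall j, is_invariant act (@allF F) H r (col j M)) -> Inv r M.
Proof.
move=> iM h Hh; apply: mx_eq_cols => j.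
have [_ e] := iM j; move: (e h Hh); rewrite /gact colE map_mxM actm_delta mulmxA.
by [].
Qed.

Lemma mulmx_sum_col m n (M : 'M[F]_(m, n)) (u : 'cV[F]_n) :
  M *m u = \sum_j u j 0 *: col j M.
Proof.
apply/matrixP => a b; rewrite ord1 !mxE summxE; apply: eq_bigr => j _.
by rewrite !mxE mulrC.
Qed.

Lemma MY_span n p (r : G -> 'M[F]_n) (M : 'M[F]_(n, p)) (Y : 'M[F]_(p, n)) :
  Inv r M -> M *m Y = 1%:M -> spanned_by_invariants act (@allF F) H r.
Proof.
move=> iM MY v _; exists p, (fun j => (Y *m v) j 0), (fun j => col j M); split => //.
  exact: Inv_col.
by rewrite -mulmx_sum_col mulmxA MY mul1mx.
Qed.

Lemma span_MY n (r : G -> 'M[F]_n) : spanned_by_invariants act (@allF F) H r ->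
  forall l (X : 'M[F]_(n, l)), exists p (M : 'M[F]_(n, p)) (Y : 'M[F]_(p, l)),
    Inv r M /\ M *m Y = X.
Proof.
move=> sp; elim => [|l IH] X.
  exists 0%N, 0, 0; split; first by move=> h _; rewrite map_mx0 mulmx0.
  by apply/matrixP => a [].
have [k [c [w [_ wI ex]]]] := sp (lsubmx (X : 'M_(n, 1 + l))) (@mx_in_all _ _ _).
have [p [M' [Y' [iM' eM']]]] := IH (rsubmx (X : 'M_(n, 1 + l))).
pose W := \matrix_(a, j) w j a 0 : 'M[F]_(n, k).
pose cv := \col_j c j : 'M[F]_(k, 1).
have cW j : col j W = w j by apply/matrixP => a b; rewrite !mxE ord1.
have iW : Inv r W by apply: Inv_cols => j; rewrite cW.
have eW : W *m cv = lsubmx (X : 'M_(n, 1 + l)).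
  rewrite ex; apply/matrixP => a b; rewrite ord1 !mxE summxE; apply: eq_bigr => j _.
  by rewrite !mxE mulrC.
exists (k + p)%N, (row_mx W M'), (block_mx cv 0 0 Y'); split.
  by move=> h Hh; rewrite map_row_mx mul_mx_row iW // iM'.
change (row_mx W M' *m block_mx cv 0 0 Y' = (X : 'M_(n, 1 + l))).
rewrite mul_row_block !mulmx0 addr0 add0r eW eM'.
exact: (hsubmxK (X : 'M_(n, 1 + l))).
Qed.

Lemma triv_span n (r : G -> 'M[F]_n) : (forall h, H h -> r h = 1%:M) ->
  spanned_by_invariants act L H r.
Proof.
move=> tr v vL; exists n, (fun j => v j 0), (fun j => delta_mx j 0); split.
- by move=> j; exact: vL.
- move=> j; split; first exact: delta_L.
  by move=> h Hh; rewrite /gact tr // mul1mx actm_delta.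
rewrite -{1}[v]mul1mx mulmx_sum_col; apply: eq_bigr => j _; congr (_ *: _).
by apply/matrixP => a b; rewrite !mxE ord1 eqxx andbT.
Qed.

Lemma RepHL_of n (r : G -> 'M[F]_n) : is_rep act L r -> (forall h, H h -> r h = 1%:M) ->
  RepHL act H r.
Proof. by move=> rr tr; split => //; exact: triv_span. Qed.

Lemma Inv_left n p (r : G -> 'M[F]_n) (M : 'M[F]_(n, p)) : is_rep act (@allF F) r ->
  Inv r M -> forall h, H h -> actm h M = actm h (r h^-1)%g *m M.
Proof.
move=> rr iM h Hh; have [_ e] := rep_inv rr h.
by rewrite -{2}(iM h Hh) mulmxA e mul1mx.
Qed.

Lemma desc_surj n p (r : G -> 'M[F]_n) (M : 'M[F]_(n, p)) (Y : 'M[F]_(p, n)) :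
  is_rep act (@allF F) r -> Inv r M -> M *m Y = 1%:M ->
  exists Z : 'M[F]_(p, n), fixm Z /\ uF (\det (M *m Z)).
Proof.
move=> rr iM MY; exists (Sel M^T)^T; split.
  move=> h Hh; rewrite -map_trmx Sel_act -map_trmx (Inv_left rr iM Hh) trmx_mul.
  rewrite Sel_mulr // det_tr; have [_ e] := rep_inv rr h.
  by have [] := uF_of_inv e.
rewrite -det_tr trmx_mul trmxK; apply: D_unitF; exact: rank_of_rinv MY.
Qed.


Lemma fixm_delta m n (a : 'I_m) (b : 'I_n) : fixm (delta_mx a b : 'M[F]_(m, n)).
Proof. by move=> h _; exact: actm_delta. Qed.

Lemma part_exact n1 n2 n3 (A : 'M[F]_(n2, n1)) (B : 'M[F]_(n3, n2)) :
  mx_in L A -> mx_in L B -> exact_at L A B -> exact_at (@allF F) A B.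
Proof.
move=> AL BL ex.
have fA := proj1 (mx_inLP A) AL; have fB := proj1 (mx_inLP B) BL.
have BA : B *m A = 0.
  apply: mx_eq_cols => j; rewrite mul0mx -mulmxA; apply/(proj2 (ex _ _)).
    by apply/mx_inLP; apply: fixmM => //; exact: fixm_delta.
  by exists (delta_mx j 0); split => //; exact: delta_L.
move=> v _; split; last first.
  by case=> u [_ ->]; rewrite mulmxA BA mul0mx.
move=> Bv.
have hloc : forall i, exists u : 'cV[K i]_n1, pm i v = pm i A *m u.
  move=> i.
  have [S [T [uST fact]]] := rank_factor (pm i B).
  set Bs := mxsub S T B.
  pose Z := colsub T (1%:M : 'M[F]_n2) *m \adj Bs *m rowsub S B - (\det Bs)%:M.
  have fZ : fixm Z.
    move=> h Hh; rewrite /Z map_mxD map_mxN !map_mxM map_mx_adj map_scalar_mx -det_map_mx.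
    by rewrite !map_mxsub fB // map_mx1.
  have piBs : pm i Bs = mxsub S T (pm i B) by rewrite map_mxsub.
  have dnz : pi i (\det Bs) != 0 by rewrite -det_map_mx piBs -unitfE -unitmxE.
  have adjE : \adj (mxsub S T (pm i B)) = \det (mxsub S T (pm i B)) *: invmx (mxsub S T (pm i B)).
    by rewrite /invmx uST scalerA mulfV ?scale1r // -unitfE -unitmxE.
  have BZi : pm i (B *m Z) = 0.
    rewrite map_mxM /Z map_mxD map_mxN !map_mxM map_mx_adj !map_mxsub map_mx1 map_scalar_mx.
    rewrite -det_map_mx piBs mulmxDr mulmxN mul_mx_scalar !mulmxA mulmx_colsub mulmx1.
    by rewrite adjE -scalemxAr -scalemxAl -fact; apply: subrr.
  have fYz : fixm (B *m Z) by apply: fixmM.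
  have eZ0 : forall x, x *: (B *m Z) = 0 -> B *m (x *: Z) = 0 by move=> x; rewrite -scalemxAr.
  move: (B *m Z) fYz BZi eZ0 => Yz fYz BZi eZ0'.
  pose e := \prod_(a < n3) \prod_(b < n2) (1 - cc (Yz a b)).
  have pie : pi i e = 1.
    rewrite rmorph_prod big1 // => a _; rewrite rmorph_prod big1 // => b _.
    rewrite rmorphB rmorph1 /= pi_cc.
    by move: BZi => /matrixP /(_ a b); rewrite !mxE => ->; rewrite eqxx subr0.
  have fe h : H h -> act h e = e.
    move=> Hh; rewrite rmorph_prod; apply: eq_bigr => a _; rewrite rmorph_prod.
    apply: eq_bigr => b _; rewrite rmorphB rmorph1 /= act_cc.
    by move: (fYz h Hh) => /matrixP /(_ a b); rewrite !mxE => ->.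
  have eY : e *: Yz = 0.
    apply/matrixP => a b; rewrite !mxE.
    have k : (1 - cc (Yz a b)) * Yz a b = 0.
      by rewrite mulrBl mul1r /cc (qK pi_inj) subrr.
    rewrite /e (bigD1 a) //= (bigD1 b) //=.
    have -> : forall x z w y : F, x * z * w * y = (x * y) * (z * w) by move=> *; ring.
    by rewrite k mul0r.
  have eZ0 : B *m (e *: Z) = 0 by apply: eZ0'.
  have fe' : fixm (e *: Z) by move=> h Hh; rewrite map_mxZ fe // fZ.
  have hcol : forall j, exists u : 'cV[F]_n1, mx_in L u /\ col j (e *: Z) = A *m u.
    move=> j; apply/(proj1 (ex _ _)).
      by apply/mx_inLP; rewrite colE; apply: fixmM => //; exact: fixm_delta.
    by rewrite colE mulmxA eZ0 mul0mx.
  pose uf j := proj1_sig (constructive_indefinite_description _ (hcol j)).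
  pose U := \matrix_(a, j) uf j a 0.
  have eAU : e *: Z = A *m U.
    apply: mx_eq_cols => j; rewrite -colE.
    have [_ ->] := proj2_sig (constructive_indefinite_description _ (hcol j)).
    rewrite -mulmxA -colE; congr (_ *m _); apply/matrixP => a b.
    by rewrite !mxE ord1.
  have Zi : pm i Z = pm i A *m pm i U.
    by have := congr1 (map_mx (pi i)) eAU; rewrite map_mxZ pie scale1r map_mxM.
  have Zv : pm i Z *m pm i v = - (pi i (\det Bs)) *: pm i v.
    rewrite /Z map_mxD map_mxN !map_mxM mulmxDl mulNmx -!mulmxA !map_mxsub mul_rowsub_mx -map_mxM Bv.
    rewrite map_mx0 !map_scalar_mx mul_scalar_mx.
    have -> : rowsub S (0 : 'cV[K i]_n3) = 0 by apply/matrixP => a b; rewrite !mxE.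
    by rewrite !mulmx0 add0r scaleNr.
  exists (- (pi i (\det Bs))^-1 *: (pm i U *m pm i v)).
  by rewrite -scalemxAr mulmxA -Zi Zv scalerA mulrNN mulVf // scale1r.
pose uu i := proj1_sig (constructive_indefinite_description _ (hloc i)).
have [u hu] := glue pi_surj uu.
exists u; split => //; apply: (pimx_eq pi_inj) => i; rewrite map_mxM hu.
exact: (proj2_sig (constructive_indefinite_description _ (hloc i))).
Qed.


Lemma tens11 n m : (1%:M : 'M[F]_n) *t (1%:M : 'M[F]_m) = 1%:M.
Proof.
apply/matrixP => x y.
case: (mxtens_indexP x) => x1 x2; case: (mxtens_indexP y) => y1 y2.
rewrite tensmxE !mxE (inj_eq (can_inj (@mxtens_indexK _ _))) xpair_eqE.
by rewrite -natrM mulnb.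
Qed.

Lemma fixm_L m n (A : 'M[F]_(m, n)) : mx_in L A -> fixm A.
Proof. exact: (proj1 (mx_inLP A)). Qed.

Lemma L_fixm m n (A : 'M[F]_(m, n)) : fixm A -> mx_in L A.
Proof. exact: (proj2 (mx_inLP A)). Qed.

Lemma hom_inv n m (r1 : G -> 'M[F]_n) (r2 : G -> 'M[F]_m) (b : 'M[F]_(m, n)) (b' : 'M[F]_(n, m)) :
  is_hom act (@allF F) r1 r2 b -> b *m b' = 1%:M -> b' *m b = 1%:M ->
  is_hom act (@allF F) r2 r1 b'.
Proof.
move=> hb bb' b'b; apply: hom_of_mx => // g.
have e := hom_mx hb g.
have e2 : actm g b *m actm g b' = 1%:M by rewrite -map_mxM bb' map_mx1.
by rewrite -[b' *m r2 g]mulmx1 -e2 !mulmxA -(mulmxA b') -e mulmxA b'b mul1mx.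
Qed.

Lemma hom_comp n m p (r1 : G -> 'M[F]_n) (r2 : G -> 'M[F]_m) (r3 : G -> 'M[F]_p)
  (A : 'M[F]_(m, n)) (B : 'M[F]_(p, m)) :
  is_hom act (@allF F) r1 r2 A -> is_hom act (@allF F) r2 r3 B ->
  is_hom act (@allF F) r1 r3 (B *m A).
Proof.
move=> hA hB; apply: hom_of_mx => // g.
by rewrite -mulmxA (hom_mx hA) mulmxA (hom_mx hB) map_mxM mulmxA.
Qed.

Lemma act_invb n (r : G -> 'M[F]_n) (b : 'M[F]_n) :
  is_rep act (@allF F) r -> Inv r b -> uF (\det b) ->
  forall h, H h -> actm h (invm b) = invm b *m r h.
Proof.
move=> rr ib ub h Hh; rewrite invm_act (Inv_left rr ib Hh).
have [e1 e2] := rep_inv rr h.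
have [us _] := uF_of_inv e2.
rewrite invmM //; congr (_ *m _).
by apply: (@inv_uniq _ (actm h (r h^-1)%g)) => //; exact: (proj1 (invmP us)).
Qed.

Lemma RepHL_L n (r : G -> 'M[F]_n) : RepHL act H r -> forall g, fixm (r g).
Proof. by move=> [[rL _ _] _] g; apply: fixm_L. Qed.

Lemma RepHL_rep n (r : G -> 'M[F]_n) : RepHL act H r -> is_rep act (@allF F) r.
Proof. by move=> [[_ r1 rM] _]; split. Qed.

Lemma rep_L_of n (r : G -> 'M[F]_n) : is_rep act (@allF F) r -> (forall g, fixm (r g)) ->
  is_rep act L r.
Proof. by move=> [_ r1 rM] f; split => // g; apply: L_fixm. Qed.

Lemma descend n (r : G -> 'M[F]_n) (b : 'M[F]_n) :
  is_rep act (@allF F) r -> Inv r b -> uF (\det b) ->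
  (forall g, fixm (invm b *m r g *m actm g b)) ->
  exists r' : G -> 'M[F]_n,
    [/\ RepHL act H r', isoF act (ext_obj r') r, is_hom act (@allF F) r' r b
      & r' = fun g => invm b *m r g *m actm g b].
Proof.
move=> rr ib ub fr; have [bb' b'b] := invmP ub.
have [rr' h1 h2] := conj_rep rr bb' b'b.
exists (fun g => invm b *m r g *m actm g b); split => //.
- apply: RepHL_of; first exact: rep_L_of.
  by move=> h Hh; rewrite -mulmxA ib.
- by exists b, (invm b); split.
Qed.


Lemma part_monoidal :
  RepHL act H (fun _ : G => (1%:M : 'M[F]_1))
  /\ ext_obj (fun _ : G => (1%:M : 'M[F]_1)) = (fun _ : G => 1%:M)
  /\ forall n m (rho : G -> 'M[F]_n) (tau : G -> 'M[F]_m),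
       RepHL act H rho -> RepHL act H tau ->
       RepHL act H (fun g => rho g *t tau g)
       /\ ext_obj (fun g => rho g *t tau g) = (fun g => ext_obj rho g *t ext_obj tau g).
Proof.
split.
  apply: RepHL_of => //; split => //.
  - by move=> g; apply: L_fixm; exact: fixm1.
  - by move=> g h; rewrite map_mx1 mulmx1.
split => // n m rho tau hr ht; split => //.
have [[_ r1 rM] _] := hr; have [[_ t1 tM] _] := ht.
apply: RepHL_of.
  apply: rep_L_of.
    split => //; first by rewrite r1 t1 tens11.
    by move=> g h; rewrite rM tM -tensmx_mul map_mxT.
  move=> g h Hh; rewrite map_mxT.
  by rewrite (RepHL_L hr g Hh) (RepHL_L ht g Hh).
by move=> h Hh; rewrite (RepHL_trivH hr Hh) (RepHL_trivH ht Hh) tens11.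
Qed.

Lemma part_ff n m (rho : G -> 'M[F]_n) (tau : G -> 'M[F]_m) :
  RepHL act H rho -> RepHL act H tau ->
  (forall A A' : 'M[F]_(m, n), is_hom act L rho tau A ->
      is_hom act L rho tau A' -> ext_hom A = ext_hom A' -> A = A')
  /\ (forall B : 'M[F]_(m, n),
        is_hom act (@allF F) (ext_obj rho) (ext_obj tau) B ->
        exists A, is_hom act L rho tau A /\ ext_hom A = B).
Proof.
move=> hr ht; split => // B hB; exists B; split => //.
apply: hom_of_mx; last exact: (hom_mx hB).
apply: L_fixm => h Hh.
have := hom_mx hB h; rewrite /ext_obj (RepHL_trivH hr Hh) (RepHL_trivH ht Hh).
by rewrite mulmx1 mul1mx.
Qed.

Lemma part2c m (tau : G -> 'M[F]_m) : RepHL act H tau ->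
  forall v : 'cV[F]_m,
    is_invariant act (@allF F) H (ext_obj tau) v <-> mx_in L v.
Proof.
move=> ht v; split.
  case=> _ iv; apply: L_fixm => h Hh.
  by have := iv h Hh; rewrite /gact /ext_obj (RepHL_trivH ht Hh) mul1mx.
move=> vL; split => // h Hh.
by rewrite /gact /ext_obj (RepHL_trivH ht Hh) mul1mx (fixm_L vL).
Qed.

Section Normal.
Hypothesis normal : forall g h, H h -> H (g * h * g^-1)%g.

Lemma part2b n (rho : G -> 'M[F]_n) : RepF act rho ->
  spanned_by_invariants act (@allF F) H rho ->
  exists m (b : 'M[F]_(n, m)) (rho' : G -> 'M[F]_m) (b' : 'M[F]_(m, n)),
    [/\ invariant_basis act H rho b, RepHL act H rho',
        is_hom act (@allF F) (ext_obj rho') rho b,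
        b *m b' = 1%:M & b' *m b = 1%:M].
Proof.
move=> rr sp.
have [p [M [Y [iM MY]]]] := span_MY sp (1%:M : 'M[F]_n).
have [Z [fZ ub]] := desc_surj rr iM MY.
have ib : Inv rho (M *m Z) by move=> h Hh; rewrite map_mxM mulmxA iM // fZ.
move: (M *m Z) ib ub => b ib ub.
have ab := act_invb rr ib ub.
have [bb' b'b] := invmP ub.
have [_ _ rM] := rr.
have fr : forall g, fixm (invm b *m rho g *m actm g b).
  move=> g h Hh; rewrite !map_mxM ab // -!mulmxA; congr (invm b *m _).
  rewrite mulmxA -rM actmM.
  set h' := (g^-1 * h * g)%g.
  have Hh' : H h' by have := normal g^-1 Hh; rewrite invgK.
  have -> : (h * g = g * h')%g by rewrite /h' !mulgA mulgV mul1g.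
  by rewrite rM -actmM -mulmxA -map_mxM (ib _ Hh').
have [r' [hr' _ hb er']] := descend rr ib ub fr.
exists n, b, r', (invm b); split => //.
split; first by move=> j; exact: Inv_col.
move=> v [_ iv]; exists (invm b *m v); split.
  split; last by rewrite mulmxA bb' mul1mx.
  apply: L_fixm => h Hh; rewrite map_mxM ab // -mulmxA.
  by have := iv h Hh; rewrite /gact => ->.
by move=> c [_ ->]; rewrite mulmxA b'b mul1mx.
Qed.

Lemma part2a n (rho : G -> 'M[F]_n) : RepF act rho ->
  (ess_image act H rho <-> spanned_by_invariants act (@allF F) H rho).
Proof.
move=> rr; split.
  case=> m [tau [ht [A [B [hA hB AB BA]]]]].
  apply: (@MY_span _ _ _ A B) => // h Hh.
  by rewrite -(hom_mx hA) /ext_obj (RepHL_trivH ht Hh) mulmx1.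
move=> sp; have [m [b [r' [b' [_ hr' hb bb' b'b]]]]] := part2b rr sp.
exists m, r'; split => //; exists b, b'; split => //.
exact: hom_inv hb bb' b'b.
Qed.

End Normal.

Lemma part3_sub n (rho : G -> 'M[F]_n) : RepF act rho -> ess_image act H rho ->
  forall k (sig : G -> 'M[F]_k) (A : 'M[F]_(n, k)),
    RepF act sig -> is_hom act (@allF F) sig rho A ->
    (forall u : 'cV[F]_k, A *m u = 0 -> u = 0) -> ess_image act H sig.
Proof.
move=> rr [m [tau [ht [A0 [B0 [hA0 hB0 AB BA]]]]]] k sig A rs hA injA.
set A' := B0 *m A.
have hA' : is_hom act (@allF F) sig tau A' by exact: hom_comp hA hB0.
have injA' : forall u : 'cV[F]_k, A' *m u = 0 -> u = 0.
  by move=> u e; apply: injA; rewrite -[A]mul1mx -AB -!mulmxA (mulmxA B0) e mulmx0.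
have actA' : forall h, H h -> actm h A' = A' *m sig h.
  by move=> h Hh; rewrite (hom_mx hA') (RepHL_trivH ht Hh) mul1mx.
have usig : forall g, uF (\det (sig g)).
  by move=> g; have [e _] := rep_inv rs g; have [] := uF_of_inv e.
have fS : fixm (Sel A').
  by move=> h Hh; rewrite Sel_act actA' // Sel_mulr.
have uD : uF (\det (Sel A' *m A')) by apply: D_unitF; exact: rank_of_inj.
move: (Sel A') fS uD => S fS uD.
set D := S *m A'.
have actD : forall h, H h -> actm h D = D *m sig h.
  by move=> h Hh; rewrite map_mxM fS // actA' // mulmxA.
set b := invm D.
have [Db bD] := invmP uD.
have actb : forall h, H h -> sig h *m actm h b = b.
  move=> h Hh; rewrite invm_act actD // invmM // mulmxA.
  by rewrite (proj1 (invmP (usig h))) mul1mx.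
have fC : fixm (A' *m b).
  by move=> h Hh; rewrite map_mxM actA' // -mulmxA actb.
have ib : Inv sig b by move=> h Hh; exact: actb.
have ub : uF (\det b) by have [] := uF_of_inv bD.
have fr : forall g, fixm (invm b *m sig g *m actm g b).
  move=> g.
  have ibD : invm b = D.
    by apply: (@inv_uniq _ b); [exact: (proj1 (invmP ub)) | exact: Db].
  have SC : S *m (A' *m b) = 1%:M by rewrite mulmxA.
  have -> : invm b *m sig g *m actm g b = S *m tau g *m actm g (A' *m b).
    rewrite -[LHS]mul1mx -SC -!mulmxA; congr (S *m _); rewrite !mulmxA.
    rewrite ibD -(mulmxA A') bD mulmx1 (hom_mx hA') map_mxM mulmxA //.
  apply: fixmM; first apply: fixmM => //; first exact: RepHL_L ht g.
  exact: fixm_stab.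
have [r' [hr' iso _ _]] := descend rs ib ub fr.
by exists k, r'; split.
Qed.

Lemma part3_quot n (rho : G -> 'M[F]_n) : RepF act rho -> ess_image act H rho ->
  forall k (sig : G -> 'M[F]_k) (B : 'M[F]_(k, n)),
    RepF act sig -> is_hom act (@allF F) rho sig B ->
    (forall q : 'cV[F]_k, exists v : 'cV[F]_n, q = B *m v) -> ess_image act H sig.
Proof.
move=> rr [m [tau [ht [A0 [B0 [hA0 hB0 AB BA]]]]]] k sig B rs hB surB.
set B' := B *m A0.
have hB' : is_hom act (@allF F) tau sig B' by exact: hom_comp hA0 hB.
pose vf j := proj1_sig (constructive_indefinite_description _ (surB (delta_mx j 0))).
pose Y := \matrix_(a, j) (B0 *m vf j) a 0.
have B'Y : B' *m Y = 1%:M.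
  apply: mx_eq_cols => j; rewrite mul1mx -mulmxA -colE.
  have -> : col j Y = B0 *m vf j by apply/matrixP => a c; rewrite !mxE ord1.
  rewrite /B' -mulmxA (mulmxA A0) AB mul1mx.
  exact: (esym (proj2_sig (constructive_indefinite_description _ (surB (delta_mx j 0))))).
have iB' : Inv sig B'.
  by move=> h Hh; rewrite -(hom_mx hB') (RepHL_trivH ht Hh) mulmx1.
have [Z [fZ ub]] := desc_surj rs iB' B'Y.
have ib : Inv sig (B' *m Z) by move=> h Hh; rewrite map_mxM mulmxA iB' // fZ.
have ab := act_invb rs ib ub.
have fT : fixm (invm (B' *m Z) *m B').
  move=> h Hh; rewrite map_mxM ab // (Inv_left rs iB' Hh) -mulmxA (mulmxA (sig h)).
  by rewrite (proj1 (rep_inv rs h)) mul1mx.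
have fr : forall g, fixm (invm (B' *m Z) *m sig g *m actm g (B' *m Z)).
  move=> g; rewrite map_mxM mulmxA -(mulmxA _ (sig g)) -(hom_mx hB') mulmxA.
  apply: fixmM; first apply: fixmM => //; first exact: RepHL_L ht g.
  exact: fixm_stab.
have [r' [hr' iso _ _]] := descend rs ib ub fr.
by exists k, r'; split.
Qed.

End Main.

Theorem corollary3p9
  (* F = prod_i K i : a commutative ring together with ring maps pi i : F -> K i
     into fields K i, inducing a bijection F ~= prod_i K i *)
  (F : comPzRingType) (I : Type) (K : I -> fieldType)
  (pi : forall i : I, {rmorphism F -> K i})
  (pi_inj : forall x : F, (forall i, pi i x = 0) -> x = 0)
  (pi_surj : forall y : (forall i, K i), exists x : F, forall i, pi i x = y i)
  (* G a group acting on F by ring automorphisms *)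
  (G : groupType) (act : G -> {rmorphism F -> F})
  (act1 : forall x, act 1%g x = x)
  (actM : forall g h x, act (g * h)%g x = act g (act h x))
  (* G acts transitively on the principal (coordinate) idempotents of F *)
  (transitive : forall e e' : F,
      (exists i, pi i e = 1 /\ forall j, j <> i -> pi j e = 0) ->
      (exists i, pi i e' = 1 /\ forall j, j <> i -> pi j e' = 0) ->
      exists g, act g e = e')
  (* H a subgroup of G *)
  (H : G -> Prop) (H1 : H 1%g)
  (HM : forall g h, H g -> H h -> H (g * h)%g)
  (HV : forall g, H g -> H (g^-1)%g)
  (* G stabilises L = F^H *)
  (stabL : forall g x, fixedL act H x -> fixedL act H (act g x)) :
  (* (1) F (x)_L - : Rep^H_L(G) -> Rep_F(G) is exact, monoidal, fully faithful *)
  ((* exact *)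
   (forall n1 n2 n3 (r1 : G -> 'M[F]_n1) (r2 : G -> 'M[F]_n2)
       (r3 : G -> 'M[F]_n3) (A : 'M[F]_(n2, n1)) (B : 'M[F]_(n3, n2)),
      RepHL act H r1 -> RepHL act H r2 -> RepHL act H r3 ->
      is_hom act (fixedL act H) r1 r2 A -> is_hom act (fixedL act H) r2 r3 B ->
      exact_at (fixedL act H) A B ->
      exact_at (@allF F) (ext_hom A) (ext_hom B))
   /\ (* monoidal: Rep^H_L(G) is a monoidal subcategory (unit, tensor products)
         and F (x)_L - sends unit and tensor products to unit and tensor products *)
   (RepHL act H (fun _ : G => (1%:M : 'M[F]_1))
    /\ ext_obj (fun _ : G => (1%:M : 'M[F]_1)) = (fun _ : G => 1%:M)
    /\ forall n m (rho : G -> 'M[F]_n) (tau : G -> 'M[F]_m),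
         RepHL act H rho -> RepHL act H tau ->
         RepHL act H (fun g => rho g *t tau g)
         /\ ext_obj (fun g => rho g *t tau g)
            = (fun g => ext_obj rho g *t ext_obj tau g))
   /\ (* fully faithful *)
   (forall n m (rho : G -> 'M[F]_n) (tau : G -> 'M[F]_m),
      RepHL act H rho -> RepHL act H tau ->
      (forall A A' : 'M[F]_(m, n), is_hom act (fixedL act H) rho tau A ->
          is_hom act (fixedL act H) rho tau A' -> ext_hom A = ext_hom A' -> A = A')
      /\ (forall B : 'M[F]_(m, n),
            is_hom act (@allF F) (ext_obj rho) (ext_obj tau) B ->
            exists A, is_hom act (fixedL act H) rho tau A /\ ext_hom A = B)))
  /\
  (* (2) H normal: essential image = {V | F . V^H = V}, and (-)^H is a
         quasi-inverse on it *)
  ((forall g h, H h -> H (g * h * g^-1)%g) ->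
   (forall n (rho : G -> 'M[F]_n), RepF act rho ->
      (ess_image act H rho <-> spanned_by_invariants act (@allF F) H rho))
   /\ (* counit F (x)_L V^H -> V : V^H is free of finite rank over L, lies in
         Rep^H_L(G) (with the coordinate cocycle rho'), and the multiplication
         map F (x)_L V^H -> V (matrix b) is an isomorphism in Rep_F(G) *)
   (forall n (rho : G -> 'M[F]_n), RepF act rho ->
      spanned_by_invariants act (@allF F) H rho ->
      exists m (b : 'M[F]_(n, m)) (rho' : G -> 'M[F]_m) (b' : 'M[F]_(m, n)),
        [/\ invariant_basis act H rho b, RepHL act H rho',
            is_hom act (@allF F) (ext_obj rho') rho b,
            b *m b' = 1%:M & b' *m b = 1%:M])
   /\ (* unit W -> (F (x)_L W)^H is an isomorphism *)
   (forall m (tau : G -> 'M[F]_m), RepHL act H tau ->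
      forall v : 'cV[F]_m,
        is_invariant act (@allF F) H (ext_obj tau) v <-> mx_in (fixedL act H) v))
  /\
  (* (3) the essential image is closed under subobjects and quotients in Rep_F(G) *)
  (forall n (rho : G -> 'M[F]_n), RepF act rho -> ess_image act H rho ->
     (forall k (sig : G -> 'M[F]_k) (A : 'M[F]_(n, k)),
        RepF act sig -> is_hom act (@allF F) sig rho A ->
        (forall u : 'cV[F]_k, A *m u = 0 -> u = 0) -> ess_image act H sig)
     /\ (forall k (sig : G -> 'M[F]_k) (B : 'M[F]_(k, n)),
        RepF act sig -> is_hom act (@allF F) rho sig B ->
        (forall q : 'cV[F]_k, exists v : 'cV[F]_n, q = B *m v) ->
        ess_image act H sig)).
Proof.
split; [split; [|split] | split].
- move=> n1 n2 n3 r1 r2 r3 A B _ _ _ [AL _] [BL _] ex.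
  exact: (part_exact pi_inj pi_surj AL BL ex).
- exact: part_monoidal.
- move=> n m rho tau hr ht; exact: part_ff.
- move=> normal; split; [|split].
  + move=> n rho rr; exact: (part2a pi_inj pi_surj act1 actM normal rr).
  + move=> n rho rr sp; exact: (part2b pi_inj pi_surj act1 actM normal rr sp).
  + move=> m tau ht v; exact: part2c.
- move=> n rho rr ei; split.
  + move=> k sig A rs hA injA.
    exact: (part3_sub pi_inj pi_surj act1 actM stabL rr ei rs hA injA).
  + move=> k sig B rs hB surB.
    exact: (part3_quot pi_inj pi_surj act1 actM stabL rr ei rs hB surB).
Qed.
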